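(* Let $\mathcal{F}$ be an RKHS on $\mathcal{X}$ with kernel $k$ and feature map $\phi(x)=k(x,\cdot)$, and $\mathcal{U}$ an RKHS on $\mathcal{W}=\mathcal{Y}\times\mathcal{Z}$ with kernel $l$ and feature map $\varphi(w)=l(w,\cdot)$. Given an i.i.d. sample $(x_i,y_i,z_i)_{i=1}^n$ from $\mathbb{P}(X,Y,Z)$, set $w_i=(y_i,z_i)$, $\mathbf{y}=(y_1,\dots,y_n)^\top$, $\widehat{\mathcal{C}}_{XW}=\frac1n\sum_i\phi(x_i)\otimes\varphi(w_i)$, $\widehat{\mathcal{C}}_{WX}$ its adjoint, $\widehat{\mathcal{C}}_W=\frac1n\sum_i\varphi(w_i)\otimes\varphi(w_i)$, $\hat{\mathbf{b}}=\frac1n\sum_i y_i\varphi(w_i)$, and for $\lambda_1,\lambda_2>0$ let $$\hat f:=\big(\widehat{\mathcal{C}}_{XW}(\widehat{\mathcal{C}}_W+\lambda_1\mathcal{I})^{-1}\widehat{\mathcal{C}}_{WX}+\lambda_2\mathcal{I}\big)^{-1}\widehat{\mathcal{C}}_{XW}(\widehat{\mathcal{C}}_W+\lambda_1\mathcal{I})^{-1}\hat{\mathbf{b}}.$$ Let $\mathbf{K}_{ij}=k(x_i,x_j)$ and $\mathbf{L}_{ij}=l(w_i,w_j)$ be the Gram matrices and $\mathbf{M}:=\mathbf{K}(\mathbf{L}+n\lambda_1 I)^{-1}\mathbf{L}$, and assume $\mathbf{M}\mathbf{K}+n\lambda_2\mathbf{K}$ is invertible. Then $\hat f=\sum_{i=1}^n\beta_i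 k(x_i,\cdot)$ with $\boldsymbol\beta=(\mathbf{M}\mathbf{K}+n\lambda_2\mathbf{K})^{-1}\mathbf{M}\mathbf{y}$.
   Context: $\mathcal{I}$ denotes the identity operator; $(a\otimes b)u=\langle b,u\rangle a$. *)

(* Defs.v *)
From HB Require Import structures.
From mathcomp Require Import all_boot all_order all_algebra.
From mathcomp Require Import boolp classical_sets reals.
Set Implicit Arguments. Unset Strict Implicit. Unset Printing Implicit Defensive.
Import Order.TTheory GRing.Theory Num.Theory.
Local Open Scope ring_scope.

(* A real reproducing kernel Hilbert space on a set X: a real inner-product
   space V, complete for the inner-product norm, whose elements are functions
   on X (via the injective evaluation ev), with feature map feat x = k(x,.)
   satisfying the reproducing property ev f x = <f, feat x>. *)
Record RKHS (R : realType) (X : Type) := {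
  rk_space :> lmodType R;
  ip : rk_space -> rk_space -> R;
  ipC : forall u v, ip u v = ip v u;
  ipDl : forall a u v w, ip (a *: u + v) w = a * ip u w + ip v w;
  ip_ge0 : forall u, 0 <= ip u u;
  ip_eq0 : forall u, ip u u = 0 -> u = 0;
  ip_complete : forall u : nat -> rk_space,
      (forall e : R, 0 < e -> exists N, forall m p, (N <= m)%N -> (N <= p)%N ->
          ip (u m - u p) (u m - u p) < e) ->
      exists v, forall e : R, 0 < e -> exists N, forall m, (N <= m)%N ->
          ip (u m - v) (u m - v) < e;
  ev : rk_space -> X -> R;
  ev_inj : injective ev;
  feat : X -> rk_space;
  reproducing : forall f x, ev f x = ip f (feat x)
}.

Definition kern (R : realType) (X : Type) (H : RKHS R X) (x x' : X) : R :=
  ip (feat H x) (feat H x').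

Definition tens (R : realType) (X1 X2 : Type) (H1 : RKHS R X1) (H2 : RKHS R X2)
  (a : H1) (b : H2) : H2 -> H1 := fun u => ip b u *: a.

(* inverse of an operator A applied to v: the (unique, when A is bijective)
   u with A u = v *)
Definition opinv (R : realType) (V : lmodType R) (A : V -> V) (v : V) : V :=
  xget 0 [set u | A u = v].

(* Main.v *)
Require Import Defs.
From HB Require Import structures.
From mathcomp Require Import all_boot all_order all_algebra.
From mathcomp Require Import boolp classical_sets reals.
Import Order.TTheory GRing.Theory Num.Theory.
Set Implicit Arguments. Unset Strict Implicit. Unset Printing Implicit Defensive.
Local Open Scope ring_scope.

Section IP.
Variables (R : realType) (T : Type) (H : RKHS R T).

Lemma ip0l (w : H) : ip 0 w = 0.
Proof.
have := ipDl 1 (0 : H) 0 w; rewrite scale1r addr0 => /eqP.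
by rewrite -subr_eq0 mul1r opprD addrA subrr sub0r oppr_eq0 => /eqP.
Qed.

Lemma ipZl a (u w : H) : ip (a *: u) w = a * ip u w.
Proof. by have := ipDl a u 0 w; rewrite addr0 ip0l addr0. Qed.

Lemma ipDl' (u v w : H) : ip (u + v) w = ip u w + ip v w.
Proof. by have := ipDl 1 u v w; rewrite scale1r mul1r. Qed.

Lemma ipNl (u w : H) : ip (- u) w = - ip u w.
Proof. by rewrite -scaleN1r ipZl mulN1r. Qed.

Lemma ipBl (u v w : H) : ip (u - v) w = ip u w - ip v w.
Proof. by rewrite ipDl' ipNl. Qed.

Lemma ipZr a (u w : H) : ip w (a *: u) = a * ip w u.
Proof. by rewrite ipC ipZl ipC. Qed.
Lemma ipDr (u v w : H) : ip w (u + v) = ip w u + ip w v.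
Proof. by rewrite ipC ipDl' !(ipC w). Qed.
Lemma ipBr (u v w : H) : ip w (u - v) = ip w u - ip w v.
Proof. by rewrite ipC ipBl !(ipC w). Qed.
Lemma ip0r (w : H) : ip w 0 = 0.
Proof. by rewrite ipC ip0l. Qed.

Lemma ip_suml (I : Type) (r : seq I) (P : pred I) (f : I -> H) w :
  ip (\sum_(i <- r | P i) f i) w = \sum_(i <- r | P i) ip (f i) w.
Proof.
elim/big_rec2: _ => [|i y1 y2 _ <-]; first by rewrite ip0l.
by rewrite ipDl'.
Qed.

Lemma ip_sumr (I : Type) (r : seq I) (P : pred I) (f : I -> H) w :
  ip w (\sum_(i <- r | P i) f i) = \sum_(i <- r | P i) ip w (f i).
Proof. by rewrite ipC ip_suml; apply: eq_bigr => i _; rewrite ipC. Qed.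

End IP.

Definition comb (R : realType) (V : lmodType R) n (c : 'cV[R]_n) (e : 'I_n -> V) : V :=
  \sum_i c i 0 *: e i.

Lemma combD (R : realType) (V : lmodType R) n (c d : 'cV[R]_n) e :
  comb (c + d) e = comb c e + comb d e :> V.
Proof. by rewrite /comb -big_split; apply: eq_bigr => i _; rewrite mxE scalerDl. Qed.

Lemma combZ (R : realType) (V : lmodType R) n a (c : 'cV[R]_n) e :
  comb (a *: c) e = a *: comb c e :> V.
Proof. by rewrite /comb scaler_sumr; apply: eq_bigr => i _; rewrite mxE scalerA. Qed.

Definition op (R : realType) (T1 T2 : Type) (H1 : RKHS R T1) (H2 : RKHS R T2) n
  (a : 'I_n -> H1) (b : 'I_n -> H2) (u : H2) : H1 :=
  n%:R^-1 *: \sum_(i < n) tens (a i) (b i) u.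

Section Op.
Variables (R : realType) (T1 T2 T3 : Type) (H1 : RKHS R T1) (H2 : RKHS R T2) (H3 : RKHS R T3).
Variables (n : nat).

Lemma opB (a : 'I_n -> H1) (b : 'I_n -> H2) u v : op a b (u - v) = op a b u - op a b v.
Proof.
rewrite /op -scalerBr -sumrB; congr (_ *: _); apply: eq_bigr => i _.
by rewrite /tens ipBr scalerBl.
Qed.

Lemma op_adj (a : 'I_n -> H1) (b : 'I_n -> H2) h u :
  ip h (op a b u) = ip (op b a h) u.
Proof.
rewrite /op ipZr ipZl ip_sumr ip_suml; congr (_ * _); apply: eq_bigr => i _.
by rewrite /tens ipZr ipZl mulrC ipC.
Qed.

Lemma op_pos (e : 'I_n -> H1) u : 0 <= ip (op e e u) u.
Proof.
rewrite /op ipZl ip_suml mulr_ge0 ?invr_ge0 ?ler0n //.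
apply: sumr_ge0 => i _; rewrite /tens ipZl ipC; exact: sqr_ge0.
Qed.

Lemma op_comb (a : 'I_n -> H1) (b : 'I_n -> H2) (E : 'I_n -> H2) c :
  op a b (comb c E) = comb (n%:R^-1 *: ((\matrix_(i, j) ip (b i) (E j)) *m c)) a.
Proof.
rewrite combZ /op /comb; congr (_ *: _); apply: eq_bigr => i _.
rewrite /tens ip_sumr mxE; congr (_ *: _); apply: eq_bigr => j _.
by rewrite mxE ipZr mulrC.
Qed.

Lemma op_col (a : 'I_n -> H1) (b : 'I_n -> H2) u :
  op a b u = comb (n%:R^-1 *: \col_i ip (b i) u) a.
Proof. by rewrite combZ /op /comb; congr (_ *: _); apply: eq_bigr => i _; rewrite mxE. Qed.

End Op.

Lemma opinv_eq (R : realType) (V : lmodType R) (A : V -> V) v u :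
  A u = v -> (forall u', A u' = v -> u' = u) -> opinv A v = u.
Proof. by move=> Au uniq; rewrite /opinv; apply: xget_unique. Qed.
Lemma mx_part (R : realType) n (K L : 'M[R]_n) (a nn l2 : R) (y : 'cV_n):
 nn != 0 -> (L + a%:M) \in unitmx ->
 let P := invmx (L + a%:M) in let M := K *m P *m L in
 (M *m K + (nn * l2) *: K) \in unitmx ->
 let beta := invmx (M *m K + (nn * l2) *: K) *m M *m y in
 nn^-1 *: (L *m (P *m (K *m beta))) + l2 *: beta = nn^-1 *: (L *m (P *m y)).
Proof.
move=> nn0 Au P M Bu beta.
have BE : M *m K + (nn * l2) *: K = (M + (nn * l2)%:M) *m K.
  by rewrite mulmxDl mul_scalar_mx.
have Ku : K \in unitmx by move: Bu; rewrite BE unitmx_mul => /andP[].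
have PL : P *m L = L *m P.
  have AL : (L + a%:M) *m L = L *m (L + a%:M).
    by rewrite mulmxDl mulmxDr scalar_mxC.
  have PA : P *m (L + a%:M) = 1%:M by rewrite mulVmx.
  have AP : (L + a%:M) *m P = 1%:M by rewrite mulmxV.
  rewrite -[P *m L]mulmx1 -AP !mulmxA -[P *m L *m _]mulmxA -AL.
  by rewrite mulmxA PA mul1mx.
have Bb : (M *m K + (nn * l2) *: K) *m beta = M *m y.
  by rewrite /beta !mulmxA mulmxV // mul1mx.
have E : P *m L *m K *m beta + (nn * l2) *: beta = P *m L *m y.
  apply: (can_inj (mulKmx Ku)).
  move: Bb; rewrite /M mulmxDl mulmxDr -scalemxAl -scalemxAr.
  by rewrite -!mulmxA.
rewrite PL in E.
have : nn^-1 *: (L *m P *m K *m beta + (nn * l2) *: beta) = nn^-1 *: (L *m P *m y)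
  by rewrite E.
rewrite scalerDr scalerA mulrA mulVf // mul1r !mulmxA => ->.
done.
Qed.

Unset Implicit Arguments.
Theorem proposition2 (R : realType) (X Z : Type)
  (F : RKHS R X) (U : RKHS R (R * Z))
  (n : nat) (hn : (0 < n)%N)
  (x : 'I_n -> X) (y : 'I_n -> R) (z : 'I_n -> Z)
  (lam1 lam2 : R) (hl1 : 0 < lam1) (hl2 : 0 < lam2) :
  let w : 'I_n -> R * Z := fun i => (y i, z i) in
  let phi := feat F in
  let vphi := feat U in
  let CXW : U -> F := fun u => n%:R^-1 *: \sum_(i < n) tens (phi (x i)) (vphi (w i)) u in
  let CWX : F -> U := fun f => n%:R^-1 *: \sum_(i < n) tens (vphi (w i)) (phi (x i)) f in
  let CW : U -> U := fun u => n%:R^-1 *: \sum_(i < n) tens (vphi (w i)) (vphi (w i)) u in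
  let bhat : U := n%:R^-1 *: \sum_(i < n) (y i *: vphi (w i)) in
  let RW : U -> U := opinv (fun u => CW u + lam1 *: u) in
  let fhat : F :=
    opinv (fun f => CXW (RW (CWX f)) + lam2 *: f) (CXW (RW bhat)) in
  let K : 'M[R]_n := \matrix_(i, j) kern F (x i) (x j) in
  let L : 'M[R]_n := \matrix_(i, j) kern U (w i) (w j) in
  let M : 'M[R]_n := K *m invmx (L + (n%:R * lam1)%:M) *m L in
  let ycol : 'cV[R]_n := \col_i y i in
  (M *m K + (n%:R * lam2) *: K) \in unitmx ->
  let beta : 'cV[R]_n := invmx (M *m K + (n%:R * lam2) *: K) *m M *m ycol in
  fhat = \sum_(i < n) beta i 0 *: phi (x i).
Proof.
move=> w phi vphi CXW CWX CW bhat RW fhat K L M ycol Bu beta.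
pose e := fun i => vphi (w i).
pose ph := fun i => phi (x i).
have CXWE u : CXW u = op ph e u by [].
have CWXE f : CWX f = op e ph f by [].
have CWE u : CW u = op e e u by [].
have bhatE : bhat = comb (n%:R^-1 *: ycol) e.
  by rewrite combZ /bhat /comb; congr (_ *: _); apply: eq_bigr => i _; rewrite mxE.
have LE : \matrix_(i, j) ip (e i) (e j) = L by apply/matrixP => i j; rewrite !mxE.
have KE : \matrix_(i, j) ip (ph i) (ph j) = K by apply/matrixP => i j; rewrite !mxE.
have nz : n%:R != 0 :> R by rewrite pnatr_eq0 -lt0n.
pose T u := CW u + lam1 *: u.
have TE u : T u = op e e u + lam1 *: u by [].
have TB u1 u2 : T u1 - T u2 = T (u1 - u2).
  by rewrite !TE opB scalerBr opprD addrACA.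
have Tpos u : 0 <= ip (T u) u.
  rewrite TE ipDl'; apply: addr_ge0; first exact: op_pos.
  by rewrite ipZl; apply: mulr_ge0; [exact: ltW|exact: ip_ge0].
have Tinj u1 u2 : T u1 = T u2 -> u1 = u2.
  move=> h; apply/eqP; rewrite -subr_eq0; apply/eqP; apply: ip_eq0.
  have h0 : T (u1 - u2) = 0 by rewrite -TB h subrr.
  move: h0; rewrite TE => /(congr1 (fun v => ip v (u1 - u2))).
  rewrite ipDl' ip0l [ip (lam1 *: _) _]ipZl => h1.
  have p1 := op_pos e (u1 - u2); have p2 := ip_ge0 (u1 - u2).
  apply/eqP; rewrite eq_le p2 andbT.
  have : lam1 * ip (u1 - u2) (u1 - u2) <= 0 by rewrite -h1 lerDr.
  by rewrite pmulr_rle0.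
pose A := L + (n%:R * lam1)%:M.
have Tcomb a : T (comb a e) = comb (n%:R^-1 *: (A *m a)) e.
  rewrite TE op_comb LE -combZ -combD; congr comb.
  by rewrite /A mulmxDl mul_scalar_mx scalerDr scalerA mulrA mulVf // mul1r.
have comb0 : comb (0 : 'cV_n) e = 0.
  by rewrite /comb big1 // => i _; rewrite mxE scale0r.
have Gram c : L *m c = \col_i ip (e i) (comb c e).
  apply/matrixP => i j; rewrite !mxE (ord1 j) ip_sumr; apply: eq_bigr => k _.
  by rewrite ipZr !mxE mulrC.
have Asym : A^T = A.
  by apply/matrixP => i j; rewrite !mxE /kern ipC eq_sym.
have Au : A \in unitmx.
  rewrite unitmxE unitfE; apply/negP => /det0P [v v0 hv].
  have hv' : A *m v^T = 0 by have := congr1 trmx hv; rewrite trmx_mul Asym trmx0.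
  have hc : comb v^T e = 0.
    rewrite -comb0; apply: Tinj; rewrite !Tcomb hv' mulmx0 //.
  move: hv'; rewrite /A mulmxDl Gram hc mul_scalar_mx.
  have -> : \col_i ip (e i) (0 : U) = 0 by apply/matrixP => i j; rewrite !mxE ip0r.
  rewrite add0r => /eqP; rewrite scaler_eq0 mulf_eq0 (negbTE nz) /= (gt_eqF hl1) /=.
  by rewrite -trmx0 (inj_eq (@trmx_inj _ _ _)) (negbTE v0).
have RWE q : RW (comb (n%:R^-1 *: q) e) = comb (invmx A *m q) e.
  rewrite /RW; apply: opinv_eq => [|u' h].
    by have := Tcomb (invmx A *m q); rewrite mulKVmx.
  by apply: Tinj; rewrite Tcomb mulKVmx //; exact: h.
have CWXc f : CWX f = comb (n%:R^-1 *: \col_i ip (ph i) f) e.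
  by rewrite CWXE op_col.
have TRW f : T (RW (CWX f)) = CWX f by rewrite CWXc RWE Tcomb mulKVmx.
set g := comb beta ph.
have key : CXW (RW (CWX g)) + lam2 *: g = CXW (RW bhat).
  rewrite CWXE op_comb KE RWE CXWE op_comb LE -combZ -combD bhatE RWE CXWE op_comb LE.
  congr comb.
  have := @mx_part R n K L (n%:R * lam1) n%:R lam2 ycol nz Au Bu.
  exact.
rewrite /fhat; apply: (opinv_eq (u := g)); first exact: key.
move=> f h.
have {h} h : CXW (RW (CWX f)) + lam2 *: f = CXW (RW (CWX g)) + lam2 *: g.
  by rewrite key; exact: h.
move: h.
set uf := RW (CWX f); set ug := RW (CWX g) => h.
have h1 : op ph e (uf - ug) + lam2 *: (f - g) = 0.
  by rewrite opB scalerBr addrACA -opprD -!CXWE h subrr.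
have := congr1 (fun v => ip (f - g) v) h1; rewrite /= ipDr op_adj ipZr ip0r.
rewrite opB -!CWXE -(TRW f) -(TRW g) TB -/uf -/ug => h2.
apply/eqP; rewrite -subr_eq0; apply/eqP; apply: ip_eq0.
have p1 := Tpos (uf - ug); have p2 := ip_ge0 (f - g).
apply/eqP; rewrite eq_le p2 andbT.
have : lam2 * ip (f - g) (f - g) <= 0 by rewrite -h2 lerDr.
by rewrite pmulr_rle0.
Qed.
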